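(* Let $N=2$. Let $\Omega\subset\mathbb{R}^2$ be open, connected and simply connected, with light-cone coordinates $(\xi_L,\xi_R)$, and let $f:\Omega\to\mathbb{C}^2\setminus\{0\}$ be a smooth solution of the Euler--Lagrange equations of the $\mathbb{C}P^{1}$ sigma model on Minkowski space, $$P\Big\{\partial_L\partial_R f-\frac{1}{f^\dagger f}\big((f^\dagger\partial_R f)\,\partial_L f+(f^\dagger\partial_L f)\,\partial_R f\big)\Big\}=0,\qquad P={\bf 1}-\frac{f\otimes f^\dagger}{f^\dagger f},$$ such that the induced metric $G$ of the associated surface $X:\Omega\to su(2)\simeq\mathbb{R}^3$ (defined by $\partial_L X=[\partial_L P,P]$, $\partial_R X=-[\partial_R P,P]$) satisfies $\det G\neq 0$. Then the Gaussian curvature of the surface is constant and equal to $K=-4$; in particular the surface has no umbilical points.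
   Context: Minkowski metric $d\xi_L\,d\xi_R$ with $\xi_L=\xi^1+\xi^2$, $\xi_R=\xi^1-\xi^2$, $\partial_L=\frac12(\partial_{\xi^1}+\partial_{\xi^2})$, $\partial_R=\frac12(\partial_{\xi^1}-\partial_{\xi^2})$. $su(2)$ is identified with $\mathbb{R}^3$ via $(A,B)=-\frac12\mathrm{tr}(AB)$. For a solution $f$, $\partial_L[\partial_R P,P]+\partial_R[\partial_L P,P]=0$, so $X$ exists (up to an additive constant). The induced metric is $G_{BD}=(\partial_B X,\partial_D X)$, $B,D\in\{L,R\}$, i.e. $G_{LL}=J_L=\frac{\partial_L f^\dagger P\partial_L f}{f^\dagger f}$, $G_{RR}=J_R=\frac{\partial_R f^\dagger P\partial_R f}{f^\dagger f}$, $G_{LR}=-\Re\frac{\partial_R f^\dagger P\partial_L f}{f^\dagger f}$, and the Gaussian curvature is $K=\frac{1}{\sqrt{J_LJ_R-G_{LR}^2}}\,\partial_R\Big(\frac{\partial_L G_{LR}-\frac12 G_{LR}\partial_L(\ln J_L)}{\sqrt{J_LJ_R-G_{LR}^2}}\Big)$. *)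

(* Defs.v *)
From Stdlib Require Import Reals List.
From Coquelicot Require Import Coquelicot.
Open Scope R_scope.

Definition pt := (R * R)%type.

Definition open_R2 (O : pt -> Prop) : Prop := open O.

Definition connected_R2 (O : pt -> Prop) : Prop :=
  forall U V : pt -> Prop, open U -> open V ->
    (forall p, O p -> U p \/ V p) ->
    (forall p, ~ (O p /\ U p /\ V p)) ->
    (forall p, O p -> ~ U p) \/ (forall p, O p -> ~ V p).

(** Continuous maps on
    [0,1] resp. [0,1]^2 are represented by continuous maps on R resp. R^2
    (every such map extends continuously, e.g. by clamping). *)
Definition simply_connected_R2 (O : pt -> Prop) : Prop :=
  forall g : R -> pt,
    (forall t, continuous g t) ->
    (forall t, 0 <= t <= 1 -> O (g t)) ->
    g 0 = g 1 ->
    exists H : pt -> pt,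
      (forall q, continuous H q) /\
      (forall s t, 0 <= s <= 1 -> 0 <= t <= 1 -> O (H (s, t))) /\
      (forall t, 0 <= t <= 1 -> H (0, t) = g t) /\
      (forall t, 0 <= t <= 1 -> H (1, t) = g 0) /\
      (forall s, 0 <= s <= 1 -> H (s, 0) = g 0 /\ H (s, 1) = g 0).

Definition pd1 (g : pt -> R) (p : pt) : R := Derive (fun t => g (t, snd p)) (fst p).
Definition pd2 (g : pt -> R) (p : pt) : R := Derive (fun t => g (fst p, t)) (snd p).

Fixpoint iter_pd (l : list bool) (g : pt -> R) : pt -> R :=
  match l with
  | nil => g
  | b :: l' => (if b then pd1 else pd2) (iter_pd l' g)
  end.

Definition smooth_on (O : pt -> Prop) (g : pt -> R) : Prop :=
  forall (l : list bool) (p : pt), O p ->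
    continuous (iter_pd l g) p /\
    ex_derive (fun t => iter_pd l g (t, snd p)) (fst p) /\
    ex_derive (fun t => iter_pd l g (fst p, t)) (snd p).

Definition pdL (g : pt -> R) (p : pt) : R := (pd1 g p + pd2 g p) / 2.
Definition pdR (g : pt -> R) (p : pt) : R := (pd1 g p - pd2 g p) / 2.

Definition cdL (g : pt -> C) (p : pt) : C :=
  (pdL (fun q => Re (g q)) p, pdL (fun q => Im (g q)) p).
Definition cdR (g : pt -> C) (p : pt) : C :=
  (pdR (fun q => Re (g q)) p, pdR (fun q => Im (g q)) p).

Definition C2 := (C * C)%type.
Definition vadd (a b : C2) : C2 := (Cplus (fst a) (fst b), Cplus (snd a) (snd b)).
Definition vsub (a b : C2) : C2 := (Cminus (fst a) (fst b), Cminus (snd a) (snd b)).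
Definition vscal (c : C) (a : C2) : C2 := (Cmult c (fst a), Cmult c (snd a)).
Definition vzero : C2 := (RtoC 0, RtoC 0).
Definition herm (a b : C2) : C :=
  Cplus (Cmult (Cconj (fst a)) (fst b)) (Cmult (Cconj (snd a)) (snd b)).

Definition Pproj (f v : C2) : C2 := vsub v (vscal (Cdiv (herm f v) (herm f f)) f).

Definition vdL (F : pt -> C2) (p : pt) : C2 :=
  (cdL (fun q => fst (F q)) p, cdL (fun q => snd (F q)) p).
Definition vdR (F : pt -> C2) (p : pt) : C2 :=
  (cdR (fun q => fst (F q)) p, cdR (fun q => snd (F q)) p).

Definition smoothC2_on (O : pt -> Prop) (F : pt -> C2) : Prop :=
  smooth_on O (fun q => Re (fst (F q))) /\ smooth_on O (fun q => Im (fst (F q))) /\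
  smooth_on O (fun q => Re (snd (F q))) /\ smooth_on O (fun q => Im (snd (F q))).

Definition CP1_EL (F : pt -> C2) (p : pt) : Prop :=
  let f := F p in
  let ff := herm f f in
  Pproj f
    (vsub (vdL (vdR F) p)
       (vscal (Cinv ff)
          (vadd (vscal (herm f (vdR F p)) (vdL F p))
                (vscal (herm f (vdL F p)) (vdR F p))))) = vzero.

(** Induced metric components. *)
Definition J_L (F : pt -> C2) (p : pt) : R :=
  Re (Cdiv (herm (vdL F p) (Pproj (F p) (vdL F p))) (herm (F p) (F p))).
Definition J_R (F : pt -> C2) (p : pt) : R :=
  Re (Cdiv (herm (vdR F p) (Pproj (F p) (vdR F p))) (herm (F p) (F p))).
Definition G_LR (F : pt -> C2) (p : pt) : R :=
  - Re (Cdiv (herm (vdR F p) (Pproj (F p) (vdL F p))) (herm (F p) (F p))).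

Definition detG (F : pt -> C2) (p : pt) : R :=
  J_L F p * J_R F p - G_LR F p ^ 2.

Definition gaussK (F : pt -> C2) (p : pt) : R :=
  / sqrt (detG F p) *
  pdR (fun q => (pdL (G_LR F) q - / 2 * G_LR F q * pdL (fun r => ln (J_L F r)) q)
                / sqrt (detG F q)) p.

(* Main.v *)
Require Import Defs.
From Stdlib Require Import Reals.
From Coquelicot Require Import Coquelicot.
Open Scope R_scope.
From Stdlib Require Import Lra List FunctionalExtensionality.

Definition line (b : bool) (p : pt) (t : R) : pt := if b then (t, snd p) else (fst p, t).
Definition base (b : bool) (p : pt) : R := if b then fst p else snd p.
Definition pd (b : bool) (g : pt -> R) (p : pt) : R := Derive (fun t => g (line b p t)) (base b p).
Definition exd (b : bool) (g : pt -> R) (p : pt) : Prop := ex_derive (fun t => g (line b p t)) (base b p).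

Lemma line_base b p : line b p (base b p) = p.
Proof. destruct b, p; reflexivity. Qed.
Lemma base_line b p t : base b (line b p t) = t.
Proof. destruct b; reflexivity. Qed.
Lemma line_line b p t s : line b (line b p t) s = line b p s.
Proof. destruct b; reflexivity. Qed.

Lemma line_local (O : pt -> Prop) b p : open O -> O p ->
  locally (base b p) (fun t => O (line b p t)).
Proof.
  intros HO Hp. destruct (HO p Hp) as [eps H]. exists eps. intros t Ht. apply H.
  destruct b; split; simpl; try exact Ht; apply ball_center.
Qed.

Lemma pd_ext (O : pt -> Prop) b (g h : pt -> R) p : open O ->
  (forall q, O q -> g q = h q) -> O p -> pd b g p = pd b h p.
Proof.
  intros HO E Hp. unfold pd. apply Derive_ext_loc.
  apply (filter_imp (fun t => O (line b p t))). intros t Ht. now apply E.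
  now apply line_local.
Qed.

Lemma exd_ext (O : pt -> Prop) b (g h : pt -> R) p : open O ->
  (forall q, O q -> g q = h q) -> O p -> exd b g p -> exd b h p.
Proof.
  intros HO E Hp. unfold exd. apply ex_derive_ext_loc.
  apply (filter_imp (fun t => O (line b p t))). intros t Ht. now apply E.
  now apply line_local.
Qed.

Lemma cont_ext (O : pt -> Prop) (g h : pt -> R) p : open O ->
  (forall q, O q -> g q = h q) -> O p -> continuous g p -> continuous h p.
Proof.
  intros HO E Hp. apply continuous_ext_loc.
  apply (locally_open O). exact HO. intros q Hq. now rewrite (E q Hq). exact Hp.
Qed.

Fixpoint iter_app (l : list bool) b g : iter_pd (l ++ b :: nil) g = iter_pd l (pd b g).
Proof.
  destruct l as [|c l]; simpl.
  - destruct b; reflexivity.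
  - now rewrite iter_app.
Qed.

Inductive Alg (O : pt -> Prop) : (pt -> R) -> Prop :=
| A_sm g : smooth_on O g -> Alg O g
| A_const c : Alg O (fun _ => c)
| A_plus g h : Alg O g -> Alg O h -> Alg O (fun q => g q + h q)
| A_mult g h : Alg O g -> Alg O h -> Alg O (fun q => g q * h q)
| A_inv g : Alg O g -> (forall q, O q -> g q <> 0) -> Alg O (fun q => / g q)
| A_sqrt g : Alg O g -> (forall q, O q -> 0 < g q) -> Alg O (fun q => sqrt (g q))
| A_ln g : Alg O g -> (forall q, O q -> 0 < g q) -> Alg O (fun q => ln (g q))
| A_ext g h : Alg O g -> (forall q, O q -> g q = h q) -> Alg O h.

Lemma Alg_basic (O : pt -> Prop) g : open O -> Alg O g ->
  forall p, O p -> (forall b, exd b g p) /\ continuous g p.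
Proof.
  intros HO H. induction H; intros p Hp.
  - destruct (H nil p Hp) as [Hc [H1 H2]]. split; [|exact Hc].
    intros []; assumption.
  - split. intros b; unfold exd; cbv beta; apply ex_derive_const. apply continuous_const.
  - destruct (IHAlg1 p Hp) as [A1 B1]; destruct (IHAlg2 p Hp) as [A2 B2]. split.
    + intros b; unfold exd in *; apply (ex_derive_plus (fun t => g (line b p t)) (fun t => h (line b p t))); auto.
    + apply (continuous_plus g h); auto.
  - destruct (IHAlg1 p Hp) as [A1 B1]; destruct (IHAlg2 p Hp) as [A2 B2]. split.
    + intros b; unfold exd in *; apply (ex_derive_mult (fun t => g (line b p t)) (fun t => h (line b p t))); auto.
    + apply (continuous_mult g h); auto.
  - destruct (IHAlg p Hp) as [A1 B1]. split.
    + intros b; unfold exd in *. apply (ex_derive_inv (fun t => g (line b p t))). apply A1.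
      rewrite line_base. now apply H0.
    + apply (continuous_comp g Rinv). exact B1. apply continuous_Rinv. now apply H0.
  - destruct (IHAlg p Hp) as [A1 B1]. split.
    + intros b; unfold exd in *. destruct (A1 b) as [l Hl]. eexists.
      apply (is_derive_sqrt (fun t => g (line b p t))). exact Hl.
      rewrite line_base. now apply H0.
    + apply (continuous_comp g sqrt). exact B1. apply continuous_sqrt.
  - destruct (IHAlg p Hp) as [A1 B1]. split.
    + intros b; unfold exd in *. destruct (A1 b) as [l Hl]. eexists.
      apply (is_derive_comp ln (fun t => g (line b p t))).
      apply is_derive_ln. rewrite line_base. now apply H0. exact Hl.
    + apply (continuous_comp g ln). exact B1. apply continuous_ln. now apply H0.
  - split.
    + intros b. apply (exd_ext O b g h p HO H0 Hp). now apply IHAlg.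
    + apply (cont_ext O g h p HO H0 Hp). now apply IHAlg.
Qed.

Lemma pd_plus b g h p : exd b g p -> exd b h p ->
  pd b (fun q => g q + h q) p = pd b g p + pd b h p.
Proof. intros. unfold pd. apply Derive_plus; assumption. Qed.
Lemma pd_mult b g h p : exd b g p -> exd b h p ->
  pd b (fun q => g q * h q) p = pd b g p * h p + g p * pd b h p.
Proof. intros. unfold pd. rewrite Derive_mult by assumption. now rewrite line_base. Qed.
Lemma pd_const b c p : pd b (fun _ => c) p = 0.
Proof. unfold pd. apply Derive_const. Qed.
Lemma pd_inv b g p : exd b g p -> g p <> 0 ->
  pd b (fun q => / g q) p = - pd b g p / (g p * g p).
Proof. intros H Hz. unfold pd. apply is_derive_unique.
  replace (g p * g p) with (g (line b p (base b p)) ^ 2) by (rewrite line_base; ring).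
  apply (is_derive_inv (fun t => g (line b p t))). now apply Derive_correct.
  now rewrite line_base. Qed.
Lemma pd_sqrt b g p : exd b g p -> 0 < g p ->
  pd b (fun q => sqrt (g q)) p = pd b g p / (2 * sqrt (g p)).
Proof. intros H Hz. unfold pd. apply is_derive_unique.
  assert (Hz' : 0 < g (line b p (base b p))) by now rewrite line_base.
  pose proof (is_derive_sqrt (fun t => g (line b p t)) (base b p) _ (Derive_correct _ _ H) Hz') as K.
  cbv beta in K; rewrite line_base in K. exact K. Qed.
Lemma pd_ln b g p : exd b g p -> 0 < g p ->
  pd b (fun q => ln (g q)) p = pd b g p / g p.
Proof. intros H Hz. unfold pd. apply is_derive_unique.
  assert (Hz' : 0 < g (line b p (base b p))) by now rewrite line_base.
  pose proof (is_derive_comp ln (fun t => g (line b p t)) (base b p) _ _ (is_derive_ln _ Hz') (Derive_correct _ _ H)) as K.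
  cbv beta in K; rewrite line_base in K. exact K. Qed.

Section AlgS.
Context (O : pt -> Prop) (HO : open O).

Lemma A_opp g : Alg O g -> Alg O (fun q => - g q).
Proof. intros H. apply (A_ext O (fun q => (-1) * g q)). apply A_mult; [apply A_const|exact H].
  intros; ring. Qed.
Lemma A_minus g h : Alg O g -> Alg O h -> Alg O (fun q => g q - h q).
Proof. intros. apply (A_ext O (fun q => g q + (-1) * h q)). apply A_plus; auto. apply A_mult; auto. apply A_const.
  intros; ring. Qed.
Lemma A_div g h : Alg O g -> Alg O h -> (forall q, O q -> h q <> 0) -> Alg O (fun q => g q / h q).
Proof. intros. apply (A_ext O (fun q => g q * / h q)). apply A_mult; auto. apply A_inv; auto.
  intros; reflexivity. Qed.
Lemma A_pow2 g : Alg O g -> Alg O (fun q => g q ^ 2).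
Proof. intros. apply (A_ext O (fun q => g q * g q)). apply A_mult; auto. intros; ring. Qed.

Lemma Alg_exd g b p : Alg O g -> O p -> exd b g p.
Proof. intros H Hp. now apply (Alg_basic O g HO H p Hp). Qed.
Lemma Alg_cont g p : Alg O g -> O p -> continuous g p.
Proof. intros H Hp. now apply (Alg_basic O g HO H p Hp). Qed.

Lemma Alg_pd b g : Alg O g -> Alg O (pd b g).
Proof.
  intros H. induction H.
  - apply A_sm. intros l p Hp. rewrite <- iter_app. apply H. exact Hp.
  - apply (A_ext O (fun _ => 0)). apply A_const. intros; now rewrite pd_const.
  - apply (A_ext O (fun q => pd b g q + pd b h q)). now apply A_plus.
    intros q Hq. rewrite pd_plus; auto; apply Alg_exd; auto.
  - apply (A_ext O (fun q => pd b g q * h q + g q * pd b h q)).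
    apply A_plus; apply A_mult; auto.
    intros q Hq. rewrite pd_mult; auto; apply Alg_exd; auto.
  - apply (A_ext O (fun q => (-1) * pd b g q * (/ g q * / g q))).
    apply A_mult. apply A_mult. apply A_const. auto. apply A_mult; apply A_inv; auto.
    intros q Hq. rewrite pd_inv; auto. field. auto. apply Alg_exd; auto.
  - apply (A_ext O (fun q => pd b g q * (/ 2 * / sqrt (g q)))).
    apply A_mult. auto. apply A_mult. apply A_const. apply A_inv. apply A_sqrt; auto.
    intros q Hq. apply Rgt_not_eq. apply sqrt_lt_R0. auto.
    intros q Hq. rewrite pd_sqrt; auto. field. apply Rgt_not_eq. apply sqrt_lt_R0. auto.
    apply Alg_exd; auto.
  - apply (A_ext O (fun q => pd b g q * / g q)).
    apply A_mult. auto. apply A_inv; auto. intros q Hq; apply Rgt_not_eq; now apply H0.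
    intros q Hq. rewrite pd_ln; auto. apply Alg_exd; auto.
  - apply (A_ext O (pd b g)). auto. intros q Hq. apply (pd_ext O); auto.
Qed.

End AlgS.

Section Rules.
Context (O : pt -> Prop) (HO : open O).

Lemma pdLE g p : pdL g p = (pd true g p + pd false g p) / 2. Proof. reflexivity. Qed.
Lemma pdRE g p : pdR g p = (pd true g p - pd false g p) / 2. Proof. reflexivity. Qed.

Lemma Alg_pdL g : Alg O g -> Alg O (pdL g).
Proof. intros H. apply (A_ext O (fun q => (pd true g q + pd false g q) * / 2)).
  apply A_mult. apply A_plus; apply (Alg_pd O HO); auto. apply A_const. intros; reflexivity. Qed.
Lemma Alg_pdR g : Alg O g -> Alg O (pdR g).
Proof. intros H. apply (A_ext O (fun q => (pd true g q + (-1) * pd false g q) * / 2)).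
  apply A_mult. apply A_plus. apply (Alg_pd O HO); auto. apply A_mult. apply A_const. apply (Alg_pd O HO); auto. apply A_const.
  intros; rewrite pdRE; field. Qed.

Ltac ex := apply (Alg_exd O HO); auto.

Lemma L_plus g h p : Alg O g -> Alg O h -> O p ->
  pdL (fun q => g q + h q) p = pdL g p + pdL h p.
Proof. intros. rewrite !pdLE, !pd_plus by ex. field. Qed.
Lemma R_plus g h p : Alg O g -> Alg O h -> O p ->
  pdR (fun q => g q + h q) p = pdR g p + pdR h p.
Proof. intros. rewrite !pdRE, !pd_plus by ex. field. Qed.
Lemma L_mult g h p : Alg O g -> Alg O h -> O p ->
  pdL (fun q => g q * h q) p = pdL g p * h p + g p * pdL h p.
Proof. intros. rewrite !pdLE, !pd_mult by ex. field. Qed.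
Lemma R_mult g h p : Alg O g -> Alg O h -> O p ->
  pdR (fun q => g q * h q) p = pdR g p * h p + g p * pdR h p.
Proof. intros. rewrite !pdRE, !pd_mult by ex. field. Qed.
Lemma L_const c p : pdL (fun _ => c) p = 0.
Proof. rewrite !pdLE, !pd_const. field. Qed.
Lemma R_const c p : pdR (fun _ => c) p = 0.
Proof. rewrite !pdRE, !pd_const. field. Qed.
Lemma L_opp g p : Alg O g -> O p -> pdL (fun q => - g q) p = - pdL g p.
Proof. intros. rewrite !pdLE. rewrite (pd_ext O true _ (fun q => (-1) * g q)), (pd_ext O false _ (fun q => (-1) * g q)) by (auto; intros; ring).
  rewrite !pd_mult by (try ex; apply A_const). rewrite !pd_const. field. Qed.
Lemma R_opp g p : Alg O g -> O p -> pdR (fun q => - g q) p = - pdR g p.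
Proof. intros. rewrite !pdRE. rewrite (pd_ext O true _ (fun q => (-1) * g q)), (pd_ext O false _ (fun q => (-1) * g q)) by (auto; intros; ring).
  rewrite !pd_mult by (try ex; apply A_const). rewrite !pd_const. field. Qed.
Lemma L_minus g h p : Alg O g -> Alg O h -> O p ->
  pdL (fun q => g q - h q) p = pdL g p - pdL h p.
Proof. intros. unfold Rminus. rewrite L_plus, L_opp; auto. now apply A_opp. Qed.
Lemma R_minus g h p : Alg O g -> Alg O h -> O p ->
  pdR (fun q => g q - h q) p = pdR g p - pdR h p.
Proof. intros. unfold Rminus. rewrite R_plus, R_opp; auto. now apply A_opp. Qed.
Lemma L_inv g p : Alg O g -> O p -> g p <> 0 ->
  pdL (fun q => / g q) p = - pdL g p / (g p * g p).
Proof. intros. rewrite !pdLE, !pd_inv by (auto; ex). field; auto. Qed.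
Lemma R_inv g p : Alg O g -> O p -> g p <> 0 ->
  pdR (fun q => / g q) p = - pdR g p / (g p * g p).
Proof. intros. rewrite !pdRE, !pd_inv by (auto; ex). field; auto. Qed.
Lemma L_sqrt g p : Alg O g -> O p -> 0 < g p ->
  pdL (fun q => sqrt (g q)) p = pdL g p / (2 * sqrt (g p)).
Proof. intros. assert (sqrt (g p) <> 0) by (apply Rgt_not_eq, sqrt_lt_R0; auto).
  rewrite !pdLE, !pd_sqrt by (auto; ex). field; auto. Qed.
Lemma R_sqrt g p : Alg O g -> O p -> 0 < g p ->
  pdR (fun q => sqrt (g q)) p = pdR g p / (2 * sqrt (g p)).
Proof. intros. assert (sqrt (g p) <> 0) by (apply Rgt_not_eq, sqrt_lt_R0; auto).
  rewrite !pdRE, !pd_sqrt by (auto; ex). field; auto. Qed.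
Lemma L_ln g p : Alg O g -> O p -> 0 < g p ->
  pdL (fun q => ln (g q)) p = pdL g p / g p.
Proof. intros. assert (g p <> 0) by lra.
  rewrite !pdLE, !pd_ln by (auto; ex). field; auto. Qed.
Lemma R_ln g p : Alg O g -> O p -> 0 < g p ->
  pdR (fun q => ln (g q)) p = pdR g p / g p.
Proof. intros. assert (g p <> 0) by lra.
  rewrite !pdRE, !pd_ln by (auto; ex). field; auto. Qed.

Lemma L_ext g h p : (forall q, O q -> g q = h q) -> O p -> pdL g p = pdL h p.
Proof. intros. rewrite !pdLE, (pd_ext O true g h), (pd_ext O false g h); auto. Qed.
Lemma R_ext g h p : (forall q, O q -> g q = h q) -> O p -> pdR g p = pdR h p.
Proof. intros. rewrite !pdRE, (pd_ext O true g h), (pd_ext O false g h); auto. Qed.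

Lemma schwarz12 g p : Alg O g -> O p -> pd true (pd false g) p = pd false (pd true g) p.
Proof.
  intros Hg Hp. destruct p as [x y].
  change (Derive (fun z => Derive (fun t => (fun u v => g (u,v)) z t) y) x =
          Derive (fun z => Derive (fun t => (fun u v => g (u,v)) t z) x) y).
  apply Schwarz.
  - apply locally_2d_locally. apply (locally_open O); auto.
    intros [u v] Huv. simpl. split; [|split; [|split]].
    + exact (Alg_exd O HO g true (u,v) Hg Huv).
    + exact (Alg_exd O HO g false (u,v) Hg Huv).
    + exact (Alg_exd O HO (pd false g) true (u,v) (Alg_pd O HO false g Hg) Huv).
    + exact (Alg_exd O HO (pd true g) false (u,v) (Alg_pd O HO true g Hg) Huv).
  - apply continuity_2d_pt_filterlim.
    pose proof (Alg_cont O HO (pd true (pd false g)) (x,y) (Alg_pd O HO true _ (Alg_pd O HO false g Hg)) Hp) as C.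
    eapply filterlim_ext; [|exact C]. intros [u v]. reflexivity.
  - apply continuity_2d_pt_filterlim.
    pose proof (Alg_cont O HO (pd false (pd true g)) (x,y) (Alg_pd O HO false _ (Alg_pd O HO true g Hg)) Hp) as C.
    eapply filterlim_ext; [|exact C]. intros [u v]. reflexivity.
Qed.

Lemma schwarzLR g p : Alg O g -> O p -> pdL (pdR g) p = pdR (pdL g) p.
Proof.
  intros Hg Hp. rewrite pdLE, pdRE.
  assert (E1 : forall b, pd b (pdR g) p = (pd b (pd true g) p - pd b (pd false g) p) / 2).
  { intros b. rewrite (pd_ext O b _ (fun q => (pd true g q + (-1) * pd false g q) * / 2)); auto.
    2: intros; rewrite ?pdLE, ?pdRE; field.
    rewrite pd_mult, pd_plus, pd_mult, !pd_const; try (apply (Alg_exd O HO); auto; repeat first [apply A_plus | apply A_mult | apply A_const | apply (Alg_pd O HO); auto]).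
    all: first [field | (unfold exd; cbv beta; apply ex_derive_const)]. }
  assert (E2 : forall b, pd b (pdL g) p = (pd b (pd true g) p + pd b (pd false g) p) / 2).
  { intros b. rewrite (pd_ext O b _ (fun q => (pd true g q + pd false g q) * / 2)); auto.
    all: try (intros; rewrite ?pdLE, ?pdRE; field).
    rewrite pd_mult, pd_plus, !pd_const; try (apply (Alg_exd O HO); auto; repeat first [apply A_plus | apply A_mult | apply A_const | apply (Alg_pd O HO); auto]).
    all: first [field | (unfold exd; cbv beta; apply ex_derive_const)]. }
  rewrite !E1, !E2. rewrite (schwarz12 g p Hg Hp). field.
Qed.

End Rules.

Lemma L_div O (HO : open O) g h p : Alg O g -> Alg O h -> (forall q, O q -> h q <> 0) -> O p ->
  pdL (fun q => g q / h q) p = pdL g p * / h p + g p * (- pdL h p / (h p * h p)).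
Proof. intros. unfold Rdiv at 1. rewrite (L_mult O HO), (L_inv O HO); auto. apply A_inv; auto. Qed.
Lemma R_div O (HO : open O) g h p : Alg O g -> Alg O h -> (forall q, O q -> h q <> 0) -> O p ->
  pdR (fun q => g q / h q) p = pdR g p * / h p + g p * (- pdR h p / (h p * h p)).
Proof. intros. unfold Rdiv at 1. rewrite (R_mult O HO), (R_inv O HO); auto. apply A_inv; auto. Qed.
Ltac alg O HO := repeat (first [ assumption | apply (Alg_pdL O HO) | apply (Alg_pdR O HO) | apply A_const | apply A_plus | apply A_mult
  | apply (A_minus O) | apply (A_opp O) | apply (A_div O) | apply (A_pow2 O)
  | apply (A_sqrt O) | apply (A_ln O) | apply (A_inv O) ]).
Ltac side O HO := first [ assumption | solve [alg O HO] | solve [eauto] ].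
Ltac dL O HO := repeat first [ rewrite L_const | rewrite (L_plus O HO) by side O HO
  | rewrite (L_minus O HO) by side O HO | rewrite (L_opp O HO) by side O HO
  | rewrite (L_mult O HO) by side O HO | rewrite (L_div O HO) by side O HO | rewrite (L_inv O HO) by side O HO
  | rewrite (L_sqrt O HO) by side O HO | rewrite (L_ln O HO) by side O HO ].
Ltac dR O HO := repeat first [ rewrite R_const | rewrite (R_plus O HO) by side O HO
  | rewrite (R_minus O HO) by side O HO | rewrite (R_opp O HO) by side O HO
  | rewrite (R_mult O HO) by side O HO | rewrite (R_div O HO) by side O HO | rewrite (R_inv O HO) by side O HO
  | rewrite (R_sqrt O HO) by side O HO | rewrite (R_ln O HO) by side O HO ].

Lemma quot_step O (HO : open O) PFL F PEL E D p :
  Alg O PFL -> Alg O F -> Alg O PEL -> Alg O E -> Alg O D ->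
  (forall q, O q -> 0 < E q) -> (forall q, O q -> 0 < D q) -> O p ->
  pdR (fun q => (PFL q - /2 * F q * (PEL q * / E q)) / sqrt (D q)) p =
  ((pdR PFL p - /2 * (pdR F p * (PEL p * / E p) + F p * (pdR PEL p * / E p + PEL p * (- pdR E p / (E p * E p))))) * sqrt (D p)
   - (PFL p - /2 * F p * (PEL p * / E p)) * (pdR D p / (2 * sqrt (D p)))) / (sqrt (D p) * sqrt (D p)).
Proof.
  intros H1 H2 H3 H4 H5 HE HD Hp.
  assert (HEz : forall q, O q -> E q <> 0) by (intros q Hq; apply Rgt_not_eq; now apply HE).
  assert (HDz : forall q, O q -> sqrt (D q) <> 0) by (intros q Hq; apply Rgt_not_eq, sqrt_lt_R0; now apply HD).
  assert (HEp := HEz p Hp). assert (HDp := HDz p Hp).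
  dR O HO. field. auto.
Qed.

Definition dot3 (x1 x2 x3 y1 y2 y3 : R) := x1*y1+x2*y2+x3*y3.

Lemma gram (a1 a2 a3 b1 b2 b3 n1 n2 n3 c1 c2 c3 d1 d2 d3 : R) :
  let aa := dot3 a1 a2 a3 a1 a2 a3 in let ab := dot3 a1 a2 a3 b1 b2 b3 in let an := dot3 a1 a2 a3 n1 n2 n3 in
  let bb := dot3 b1 b2 b3 b1 b2 b3 in let bn := dot3 b1 b2 b3 n1 n2 n3 in let nn := dot3 n1 n2 n3 n1 n2 n3 in
  let ca := dot3 c1 c2 c3 a1 a2 a3 in let cb := dot3 c1 c2 c3 b1 b2 b3 in let cn := dot3 c1 c2 c3 n1 n2 n3 in
  let da := dot3 d1 d2 d3 a1 a2 a3 in let db := dot3 d1 d2 d3 b1 b2 b3 in let dn := dot3 d1 d2 d3 n1 n2 n3 in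
  let cd := dot3 c1 c2 c3 d1 d2 d3 in
  cd * (aa*(bb*nn - bn*bn) - ab*(ab*nn - bn*an) + an*(ab*bn - bb*an)) =
    (bb*nn - bn*bn) * ca * da + (an*bn - ab*nn) * (ca*db + cb*da) + (ab*bn - an*bb) * (ca*dn + cn*da)
  + (aa*nn - an*an) * cb * db + (ab*an - aa*bn) * (cb*dn + cn*db) + (aa*bb - ab*ab) * cn * dn.
Proof. intros. unfold aa, ab, an, bb, bn, nn, ca, cb, cn, da, db, dn, cd, dot3. ring. Qed.

Lemma final_dot (aa bb s ca cb da db cd sq E G F D ER GR FR DR PFL PFLR PEL PELR : R) :
  E = /4 * aa -> G = /4 * bb -> F = -(/4 * s) -> D = E*G - F*F ->
  ER = 0 -> GR = /2 * db -> FR = -(/4 * da) -> DR = ER*G + E*GR - 2*F*FR ->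
  PFL = -(/4 * cb) -> PFLR = -(/4 * (cd - s*s)) -> PEL = /2 * ca -> PELR = 0 ->
  cd * (aa*bb - s*s) = bb*ca*da - s*(ca*db + cb*da) + aa*cb*db + (aa*bb - s*s)*(aa*bb) ->
  sq * sq = D -> sq <> 0 -> E <> 0 -> D <> 0 ->
  / sq * (((PFLR - /2 * (FR * (PEL * / E) + F * (PELR * / E + PEL * (- ER / (E * E))))) * sq
          - (PFL - /2 * F * (PEL * / E)) * (DR / (2 * sq))) / (sq * sq)) = -4.
Proof.
  intros HE HG HF HD HER HGR HFR HDR HPFL HPFLR HPEL HPELR Hgram Hsq Hsq0 HE0 HD0.
  assert (Haa : aa <> 0) by (intro Z; apply HE0; rewrite HE, Z; ring).
  assert (Hdet : aa*bb - s*s <> 0) by (intro Z; apply HD0; rewrite HD, HE, HG, HF;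
     replace (/ 4 * aa * (/ 4 * bb) - - (/ 4 * s) * - (/ 4 * s)) with (/16 * (aa*bb - s*s)) by field; rewrite Z; ring).
  assert (Hcd : cd = (bb*ca*da - s*(ca*db + cb*da) + aa*cb*db + (aa*bb - s*s)*(aa*bb)) / (aa*bb - s*s)).
  { rewrite <- Hgram. field. exact Hdet. }
  transitivity ((((PFLR - /2 * (FR * (PEL * / E) + F * (PELR * / E + PEL * (- ER / (E * E))))) * (sq*sq)
          - /2 * (PFL - /2 * F * (PEL * / E)) * DR) / ((sq * sq)*(sq*sq)))).
  { field. auto. }
  rewrite Hsq. subst D. subst DR. rewrite HER, HGR, HFR, HPFL, HPFLR, HPEL, HPELR, HE, HG, HF, Hcd.
  rewrite HE, HG, HF in HD0. field. split; auto.
Qed.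

Lemma final_comp (n1 n2 n3 a1 a2 a3 b1 b2 b3 c1 c2 c3 d1 d2 d3 aR1 aR2 aR3 bL1 bL2 bL3 cR1 cR2 cR3 bLR1 bLR2 bLR3 sq E G F D ER GR FR DR PFL PFLR PEL PELR : R) :
  E = /4 * (dot3 a1 a2 a3 a1 a2 a3) ->
  G = /4 * (dot3 b1 b2 b3 b1 b2 b3) ->
  F = -(/4 * (dot3 a1 a2 a3 b1 b2 b3)) ->
  D = E*G - F*F ->
  ER = /2 * (dot3 aR1 aR2 aR3 a1 a2 a3) ->
  GR = /2 * (dot3 d1 d2 d3 b1 b2 b3) ->
  FR = -(/4 * ((dot3 aR1 aR2 aR3 b1 b2 b3) + (dot3 a1 a2 a3 d1 d2 d3))) ->
  DR = ER*G + E*GR - 2*F*FR ->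
  PFL = -(/4 * ((dot3 c1 c2 c3 b1 b2 b3) + (dot3 a1 a2 a3 bL1 bL2 bL3))) ->
  PFLR = -(/4 * ((dot3 cR1 cR2 cR3 b1 b2 b3) + (dot3 c1 c2 c3 d1 d2 d3) + (dot3 aR1 aR2 aR3 bL1 bL2 bL3) + (dot3 a1 a2 a3 bLR1 bLR2 bLR3))) ->
  PEL = /2 * (dot3 c1 c2 c3 a1 a2 a3) ->
  PELR = /2 * ((dot3 cR1 cR2 cR3 a1 a2 a3) + (dot3 c1 c2 c3 aR1 aR2 aR3)) ->
  (dot3 n1 n2 n3 n1 n2 n3) = 1 ->
  (dot3 a1 a2 a3 n1 n2 n3) = 0 ->
  (dot3 b1 b2 b3 n1 n2 n3) = 0 ->
  (dot3 a1 a2 a3 a1 a2 a3) + (dot3 c1 c2 c3 n1 n2 n3) = 0 ->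
  (dot3 b1 b2 b3 b1 b2 b3) + (dot3 d1 d2 d3 n1 n2 n3) = 0 ->
  aR1 = bL1 ->
  aR2 = bL2 ->
  aR3 = bL3 ->
  bL1 = - (dot3 a1 a2 a3 b1 b2 b3) * n1 ->
  bL2 = - (dot3 a1 a2 a3 b1 b2 b3) * n2 ->
  bL3 = - (dot3 a1 a2 a3 b1 b2 b3) * n3 ->
  cR1 = - ((dot3 c1 c2 c3 b1 b2 b3) + (dot3 a1 a2 a3 bL1 bL2 bL3)) * n1 - (dot3 a1 a2 a3 b1 b2 b3) * a1 ->
  cR2 = - ((dot3 c1 c2 c3 b1 b2 b3) + (dot3 a1 a2 a3 bL1 bL2 bL3)) * n2 - (dot3 a1 a2 a3 b1 b2 b3) * a2 ->
  cR3 = - ((dot3 c1 c2 c3 b1 b2 b3) + (dot3 a1 a2 a3 bL1 bL2 bL3)) * n3 - (dot3 a1 a2 a3 b1 b2 b3) * a3 ->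
  bLR1 = - ((dot3 aR1 aR2 aR3 b1 b2 b3) + (dot3 a1 a2 a3 d1 d2 d3)) * n1 - (dot3 a1 a2 a3 b1 b2 b3) * b1 ->
  bLR2 = - ((dot3 aR1 aR2 aR3 b1 b2 b3) + (dot3 a1 a2 a3 d1 d2 d3)) * n2 - (dot3 a1 a2 a3 b1 b2 b3) * b2 ->
  bLR3 = - ((dot3 aR1 aR2 aR3 b1 b2 b3) + (dot3 a1 a2 a3 d1 d2 d3)) * n3 - (dot3 a1 a2 a3 b1 b2 b3) * b3 ->
  sq * sq = D ->
  sq <> 0 ->
  E <> 0 ->
  D <> 0 ->
  / sq * (((PFLR - /2 * (FR * (PEL * / E) + F * (PELR * / E + PEL * (- ER / (E * E))))) * sq
          - (PFL - /2 * F * (PEL * / E)) * (DR / (2 * sq))) / (sq * sq)) = -4.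
Proof.
  intros HE HG HF HD HER HGR HFR HDR HPFL HPFLR HPEL HPELR Hnn Han Hbn Hcn Hdn HaR1 HaR2 HaR3 HbL1 HbL2 HbL3 HcR1 HcR2 HcR3 HbLR1 HbLR2 HbLR3 Hsq Hsq0 HE0 HD0.
  subst aR1 aR2 aR3. subst bL1 bL2 bL3. subst cR1 cR2 cR3 bLR1 bLR2 bLR3.
  apply (final_dot (dot3 a1 a2 a3 a1 a2 a3) (dot3 b1 b2 b3 b1 b2 b3) (dot3 a1 a2 a3 b1 b2 b3) (dot3 c1 c2 c3 a1 a2 a3) (dot3 c1 c2 c3 b1 b2 b3) (dot3 d1 d2 d3 a1 a2 a3) (dot3 d1 d2 d3 b1 b2 b3) (dot3 c1 c2 c3 d1 d2 d3) sq E G F D ER GR FR DR PFL PFLR PEL PELR); auto.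
  - rewrite HER. transitivity (- /2 * (dot3 a1 a2 a3 b1 b2 b3) * (dot3 a1 a2 a3 n1 n2 n3)). unfold dot3; ring. rewrite Han; ring.
  - rewrite HFR. transitivity (-(/4 * ((dot3 d1 d2 d3 a1 a2 a3) - (dot3 a1 a2 a3 b1 b2 b3) * (dot3 b1 b2 b3 n1 n2 n3)))). unfold dot3; ring. rewrite Hbn; ring.
  - rewrite HPFL. transitivity (-(/4 * ((dot3 c1 c2 c3 b1 b2 b3) - (dot3 a1 a2 a3 b1 b2 b3) * (dot3 a1 a2 a3 n1 n2 n3)))). unfold dot3; ring. rewrite Han; ring.
  - rewrite HPFLR. transitivity (-(/4 * ((dot3 c1 c2 c3 d1 d2 d3) - (dot3 a1 a2 a3 b1 b2 b3)*(dot3 a1 a2 a3 b1 b2 b3) + (dot3 a1 a2 a3 b1 b2 b3)*(dot3 a1 a2 a3 b1 b2 b3)*((dot3 n1 n2 n3 n1 n2 n3) - 1) - ((dot3 c1 c2 c3 b1 b2 b3) - (dot3 a1 a2 a3 b1 b2 b3) * (dot3 a1 a2 a3 n1 n2 n3)) * (dot3 b1 b2 b3 n1 n2 n3) - ((dot3 d1 d2 d3 a1 a2 a3) - (dot3 a1 a2 a3 b1 b2 b3) * (dot3 b1 b2 b3 n1 n2 n3)) * (dot3 a1 a2 a3 n1 n2 n3) ))).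
    unfold dot3; ring. rewrite Hnn, Han, Hbn; ring.
  - rewrite HPELR. transitivity (/2 * (- ((dot3 c1 c2 c3 b1 b2 b3) - (dot3 a1 a2 a3 b1 b2 b3) * (dot3 a1 a2 a3 n1 n2 n3)) * (dot3 a1 a2 a3 n1 n2 n3) - (dot3 a1 a2 a3 b1 b2 b3) * ((dot3 a1 a2 a3 a1 a2 a3) + (dot3 c1 c2 c3 n1 n2 n3)))).
    unfold dot3; ring. rewrite Han, Hcn; ring.
  - pose proof (gram a1 a2 a3 b1 b2 b3 n1 n2 n3 c1 c2 c3 d1 d2 d3) as Gr. simpl in Gr.
    rewrite Hnn, Han, Hbn in Gr.
    replace (dot3 c1 c2 c3 n1 n2 n3) with (- (dot3 a1 a2 a3 a1 a2 a3)) in Gr by lra.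
    replace (dot3 d1 d2 d3 n1 n2 n3) with (- (dot3 b1 b2 b3 b1 b2 b3)) in Gr by lra.
    replace (dot3 d1 d2 d3 c1 c2 c3) with (dot3 c1 c2 c3 d1 d2 d3) in Gr by (unfold dot3; ring).
    transitivity ((dot3 c1 c2 c3 d1 d2 d3) * ((dot3 a1 a2 a3 a1 a2 a3) * ((dot3 b1 b2 b3 b1 b2 b3) * 1 - 0 * 0) - (dot3 a1 a2 a3 b1 b2 b3) * ((dot3 a1 a2 a3 b1 b2 b3) * 1 - 0 * 0) + 0 * ((dot3 a1 a2 a3 b1 b2 b3) * 0 - (dot3 b1 b2 b3 b1 b2 b3) * 0))).
    ring. rewrite Gr. unfold dot3; ring.
Qed.

Definition Ef (n1 n2 n3 : pt -> R) (q : pt) : R := /4 * (pdL n1 q * pdL n1 q + pdL n2 q * pdL n2 q + pdL n3 q * pdL n3 q).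
Definition Gf (n1 n2 n3 : pt -> R) (q : pt) : R := /4 * (pdR n1 q * pdR n1 q + pdR n2 q * pdR n2 q + pdR n3 q * pdR n3 q).
Definition Ff (n1 n2 n3 : pt -> R) (q : pt) : R := - (/4 * (pdL n1 q * pdR n1 q + pdL n2 q * pdR n2 q + pdL n3 q * pdR n3 q)).
Definition Df (n1 n2 n3 : pt -> R) (q : pt) : R := Ef n1 n2 n3 q * Gf n1 n2 n3 q - Ff n1 n2 n3 q * Ff n1 n2 n3 q.

Lemma lagrange (a1 a2 a3 b1 b2 b3 : R) :
  (a1*a1+a2*a2+a3*a3)*(b1*b1+b2*b2+b3*b3) - (a1*b1+a2*b2+a3*b3)*(a1*b1+a2*b2+a3*b3)
  = (a1*b2-a2*b1)*(a1*b2-a2*b1) + (a1*b3-a3*b1)*(a1*b3-a3*b1) + (a2*b3-a3*b2)*(a2*b3-a3*b2).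
Proof. ring. Qed.

Lemma core O (HO : open O) (n1 n2 n3 : pt -> R) :
  Alg O n1 -> Alg O n2 -> Alg O n3 ->
  (forall q, O q -> n1 q * n1 q + n2 q * n2 q + n3 q * n3 q = 1) ->
  (forall q, O q -> pdL (pdR n1) q = - (pdL n1 q * pdR n1 q + pdL n2 q * pdR n2 q + pdL n3 q * pdR n3 q) * n1 q) ->
  (forall q, O q -> pdL (pdR n2) q = - (pdL n1 q * pdR n1 q + pdL n2 q * pdR n2 q + pdL n3 q * pdR n3 q) * n2 q) ->
  (forall q, O q -> pdL (pdR n3) q = - (pdL n1 q * pdR n1 q + pdL n2 q * pdR n2 q + pdL n3 q * pdR n3 q) * n3 q) ->
  (forall q, O q -> Df n1 n2 n3 q <> 0) ->
  forall p, O p ->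
  / sqrt (Df n1 n2 n3 p) * pdR (fun q => (pdL (Ff n1 n2 n3) q - /2 * Ff n1 n2 n3 q * pdL (fun r => ln (Ef n1 n2 n3 r)) q) / sqrt (Df n1 n2 n3 q)) p = -4.
Proof.
  intros Hn1 Hn2 Hn3 Hunit Hw1 Hw2 Hw3 HD p Hp.
  assert (HAE : Alg O (Ef n1 n2 n3)) by (unfold Ef; alg O HO).
  assert (HAG : Alg O (Gf n1 n2 n3)) by (unfold Gf; alg O HO).
  assert (HAF : Alg O (Ff n1 n2 n3)) by (unfold Ff; alg O HO).
  assert (HAD : Alg O (Df n1 n2 n3)) by (unfold Df; alg O HO).
  assert (HDpos : forall q, O q -> 0 < Df n1 n2 n3 q).
  { intros q Hq. specialize (HD q Hq).
    assert (0 <= Df n1 n2 n3 q).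
    { replace (Df n1 n2 n3 q) with (/16 * ((dot3 (pdL n1 q) (pdL n2 q) (pdL n3 q) (pdL n1 q) (pdL n2 q) (pdL n3 q))*(dot3 (pdR n1 q) (pdR n2 q) (pdR n3 q) (pdR n1 q) (pdR n2 q) (pdR n3 q)) - (dot3 (pdL n1 q) (pdL n2 q) (pdL n3 q) (pdR n1 q) (pdR n2 q) (pdR n3 q))*(dot3 (pdL n1 q) (pdL n2 q) (pdL n3 q) (pdR n1 q) (pdR n2 q) (pdR n3 q))))
        by (unfold Df, Ef, Gf, Ff, dot3; field).
      unfold dot3. rewrite lagrange. apply Rmult_le_pos. lra.
      repeat apply Rplus_le_le_0_compat; apply Rle_0_sqr. }
    lra. }
  assert (HEpos : forall q, O q -> 0 < Ef n1 n2 n3 q).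
  { intros q Hq. specialize (HDpos q Hq).
    assert (H0 : 0 <= Ef n1 n2 n3 q) by (unfold Ef; apply Rmult_le_pos; [lra|]; repeat apply Rplus_le_le_0_compat; apply Rle_0_sqr).
    assert (H1 : 0 <= Gf n1 n2 n3 q) by (unfold Gf; apply Rmult_le_pos; [lra|]; repeat apply Rplus_le_le_0_compat; apply Rle_0_sqr).
    destruct H0 as [H0|H0]; auto. unfold Df in HDpos. rewrite <- H0 in HDpos. nra. }
  assert (HEz : forall q, O q -> Ef n1 n2 n3 q <> 0) by (intros q Hq; apply Rgt_not_eq; now apply HEpos).
  assert (HDz : forall q, O q -> sqrt (Df n1 n2 n3 q) <> 0) by (intros q Hq; apply Rgt_not_eq, sqrt_lt_R0; now apply HDpos).
  assert (Hna : forall q, O q -> dot3 (pdL n1 q) (pdL n2 q) (pdL n3 q) (n1 q) (n2 q) (n3 q) = 0).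
  { intros q Hq.
    assert (E : pdL (fun r => n1 r * n1 r + n2 r * n2 r + n3 r * n3 r) q = pdL (fun _ => 1) q) by (apply (L_ext O HO); auto).
    rewrite L_const in E.
    transitivity (/2 * pdL (fun r => n1 r * n1 r + n2 r * n2 r + n3 r * n3 r) q).
    dL O HO. unfold dot3. field. rewrite E; field. }
  assert (Hnb : forall q, O q -> dot3 (pdR n1 q) (pdR n2 q) (pdR n3 q) (n1 q) (n2 q) (n3 q) = 0).
  { intros q Hq.
    assert (E : pdR (fun r => n1 r * n1 r + n2 r * n2 r + n3 r * n3 r) q = pdR (fun _ => 1) q) by (apply (R_ext O HO); auto).
    rewrite R_const in E.
    transitivity (/2 * pdR (fun r => n1 r * n1 r + n2 r * n2 r + n3 r * n3 r) q).
    dR O HO. unfold dot3; field. rewrite E; field. }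
  assert (Hcn : dot3 (pdL n1 p) (pdL n2 p) (pdL n3 p) (pdL n1 p) (pdL n2 p) (pdL n3 p) + dot3 (pdL (pdL n1) p) (pdL (pdL n2) p) (pdL (pdL n3) p) (n1 p) (n2 p) (n3 p) = 0).
  { assert (E : pdL (fun r => pdL n1 r * n1 r + pdL n2 r * n2 r + pdL n3 r * n3 r) p = pdL (fun _ => 0) p).
    { apply (L_ext O HO); auto; intros r Hr; generalize (Hna r Hr); unfold dot3; auto. }
    rewrite L_const in E. rewrite <- E. dL O HO. unfold dot3; field. }
  assert (Hdn : dot3 (pdR n1 p) (pdR n2 p) (pdR n3 p) (pdR n1 p) (pdR n2 p) (pdR n3 p) + dot3 (pdR (pdR n1) p) (pdR (pdR n2) p) (pdR (pdR n3) p) (n1 p) (n2 p) (n3 p) = 0).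
  { assert (E : pdR (fun r => pdR n1 r * n1 r + pdR n2 r * n2 r + pdR n3 r * n3 r) p = pdR (fun _ => 0) p).
    { apply (R_ext O HO); auto; intros r Hr; generalize (Hnb r Hr); unfold dot3; auto. }
    rewrite R_const in E. rewrite <- E. dR O HO. unfold dot3; field. }
  assert (HcR1 : pdR (pdL (pdL n1)) p = - (dot3 (pdL (pdL n1) p) (pdL (pdL n2) p) (pdL (pdL n3) p) (pdR n1 p) (pdR n2 p) (pdR n3 p) + dot3 (pdL n1 p) (pdL n2 p) (pdL n3 p) (pdL (pdR n1) p) (pdL (pdR n2) p) (pdL (pdR n3) p)) * n1 p - dot3 (pdL n1 p) (pdL n2 p) (pdL n3 p) (pdR n1 p) (pdR n2 p) (pdR n3 p) * pdL n1 p).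
  { rewrite <- (schwarzLR O HO (pdL n1)) by (auto; alg O HO).
    rewrite (L_ext O HO (pdR (pdL n1)) (fun q => - (pdL n1 q * pdR n1 q + pdL n2 q * pdR n2 q + pdL n3 q * pdR n3 q) * n1 q)); auto.
    dL O HO. unfold dot3; field.
    intros q Hq. rewrite <- (schwarzLR O HO n1) by auto. apply Hw1; auto. }
  assert (HbLR1 : pdR (pdL (pdR n1)) p = - (dot3 (pdR (pdL n1) p) (pdR (pdL n2) p) (pdR (pdL n3) p) (pdR n1 p) (pdR n2 p) (pdR n3 p) + dot3 (pdL n1 p) (pdL n2 p) (pdL n3 p) (pdR (pdR n1) p) (pdR (pdR n2) p) (pdR (pdR n3) p)) * n1 p - dot3 (pdL n1 p) (pdL n2 p) (pdL n3 p) (pdR n1 p) (pdR n2 p) (pdR n3 p) * pdR n1 p).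
  { rewrite (R_ext O HO (pdL (pdR n1)) (fun q => - (pdL n1 q * pdR n1 q + pdL n2 q * pdR n2 q + pdL n3 q * pdR n3 q) * n1 q)); auto.
    dR O HO. unfold dot3; field. }
  assert (HcR2 : pdR (pdL (pdL n2)) p = - (dot3 (pdL (pdL n1) p) (pdL (pdL n2) p) (pdL (pdL n3) p) (pdR n1 p) (pdR n2 p) (pdR n3 p) + dot3 (pdL n1 p) (pdL n2 p) (pdL n3 p) (pdL (pdR n1) p) (pdL (pdR n2) p) (pdL (pdR n3) p)) * n2 p - dot3 (pdL n1 p) (pdL n2 p) (pdL n3 p) (pdR n1 p) (pdR n2 p) (pdR n3 p) * pdL n2 p).
  { rewrite <- (schwarzLR O HO (pdL n2)) by (auto; alg O HO).
    rewrite (L_ext O HO (pdR (pdL n2)) (fun q => - (pdL n1 q * pdR n1 q + pdL n2 q * pdR n2 q + pdL n3 q * pdR n3 q) * n2 q)); auto.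
    dL O HO. unfold dot3; field.
    intros q Hq. rewrite <- (schwarzLR O HO n2) by auto. apply Hw2; auto. }
  assert (HbLR2 : pdR (pdL (pdR n2)) p = - (dot3 (pdR (pdL n1) p) (pdR (pdL n2) p) (pdR (pdL n3) p) (pdR n1 p) (pdR n2 p) (pdR n3 p) + dot3 (pdL n1 p) (pdL n2 p) (pdL n3 p) (pdR (pdR n1) p) (pdR (pdR n2) p) (pdR (pdR n3) p)) * n2 p - dot3 (pdL n1 p) (pdL n2 p) (pdL n3 p) (pdR n1 p) (pdR n2 p) (pdR n3 p) * pdR n2 p).
  { rewrite (R_ext O HO (pdL (pdR n2)) (fun q => - (pdL n1 q * pdR n1 q + pdL n2 q * pdR n2 q + pdL n3 q * pdR n3 q) * n2 q)); auto.
    dR O HO. unfold dot3; field. }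
  assert (HcR3 : pdR (pdL (pdL n3)) p = - (dot3 (pdL (pdL n1) p) (pdL (pdL n2) p) (pdL (pdL n3) p) (pdR n1 p) (pdR n2 p) (pdR n3 p) + dot3 (pdL n1 p) (pdL n2 p) (pdL n3 p) (pdL (pdR n1) p) (pdL (pdR n2) p) (pdL (pdR n3) p)) * n3 p - dot3 (pdL n1 p) (pdL n2 p) (pdL n3 p) (pdR n1 p) (pdR n2 p) (pdR n3 p) * pdL n3 p).
  { rewrite <- (schwarzLR O HO (pdL n3)) by (auto; alg O HO).
    rewrite (L_ext O HO (pdR (pdL n3)) (fun q => - (pdL n1 q * pdR n1 q + pdL n2 q * pdR n2 q + pdL n3 q * pdR n3 q) * n3 q)); auto.
    dL O HO. unfold dot3; field.
    intros q Hq. rewrite <- (schwarzLR O HO n3) by auto. apply Hw3; auto. }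
  assert (HbLR3 : pdR (pdL (pdR n3)) p = - (dot3 (pdR (pdL n1) p) (pdR (pdL n2) p) (pdR (pdL n3) p) (pdR n1 p) (pdR n2 p) (pdR n3 p) + dot3 (pdL n1 p) (pdL n2 p) (pdL n3 p) (pdR (pdR n1) p) (pdR (pdR n2) p) (pdR (pdR n3) p)) * n3 p - dot3 (pdL n1 p) (pdL n2 p) (pdL n3 p) (pdR n1 p) (pdR n2 p) (pdR n3 p) * pdR n3 p).
  { rewrite (R_ext O HO (pdL (pdR n3)) (fun q => - (pdL n1 q * pdR n1 q + pdL n2 q * pdR n2 q + pdL n3 q * pdR n3 q) * n3 q)); auto.
    dR O HO. unfold dot3; field. }
  rewrite (R_ext O HO _ (fun q => ((fun q => - (/4 * (pdL (pdL n1) q * pdR n1 q + pdL n1 q * pdL (pdR n1) q + pdL (pdL n2) q * pdR n2 q + pdL n2 q * pdL (pdR n2) q + pdL (pdL n3) q * pdR n3 q + pdL n3 q * pdL (pdR n3) q))) q - /2 * Ff n1 n2 n3 q * ((fun q => /2 * (pdL (pdL n1) q * pdL n1 q + pdL (pdL n2) q * pdL n2 q + pdL (pdL n3) q * pdL n3 q)) q * / Ef n1 n2 n3 q)) / sqrt (Df n1 n2 n3 q))); auto.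
  2: { intros q Hq. rewrite (L_ln O HO) by auto.
       replace (pdL (Ff n1 n2 n3) q) with ((fun q => - (/4 * (pdL (pdL n1) q * pdR n1 q + pdL n1 q * pdL (pdR n1) q + pdL (pdL n2) q * pdR n2 q + pdL n2 q * pdL (pdR n2) q + pdL (pdL n3) q * pdR n3 q + pdL n3 q * pdL (pdR n3) q))) q) by (unfold Ff; dL O HO; field).
       replace (pdL (Ef n1 n2 n3) q) with ((fun q => /2 * (pdL (pdL n1) q * pdL n1 q + pdL (pdL n2) q * pdL n2 q + pdL (pdL n3) q * pdL n3 q)) q) by (unfold Ef; dL O HO; field).
       reflexivity. }
  rewrite (quot_step O HO) by (auto; alg O HO).
  apply (final_comp (n1 p) (n2 p) (n3 p) (pdL n1 p) (pdL n2 p) (pdL n3 p) (pdR n1 p) (pdR n2 p) (pdR n3 p) (pdL (pdL n1) p) (pdL (pdL n2) p) (pdL (pdL n3) p) (pdR (pdR n1) p) (pdR (pdR n2) p) (pdR (pdR n3) p) (pdR (pdL n1) p) (pdR (pdL n2) p) (pdR (pdL n3) p) (pdL (pdR n1) p) (pdL (pdR n2) p) (pdL (pdR n3) p) (pdR (pdL (pdL n1)) p) (pdR (pdL (pdL n2)) p) (pdR (pdL (pdL n3)) p) (pdR (pdL (pdR n1)) p) (pdR (pdL (pdR n2)) p) (pdR (pdL (pdR n3)) p) _ _ (Gf n1 n2 n3 p) _ (Df n1 n2 n3 p) _ (pdR (Gf n1 n2 n3) p)).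
  all: try (unfold Ef, Gf, Ff, Df, dot3; reflexivity).
  all: try assumption.
  - unfold Ef. cbv beta. dR O HO. unfold dot3; field.
  - unfold Gf. cbv beta. dR O HO. unfold dot3; field.
  - unfold Ff. cbv beta. dR O HO. unfold dot3; field.
  - unfold Df. cbv beta. dR O HO. field.
  - unfold dot3; field.
  - dR O HO. unfold dot3; field.
  - dR O HO. unfold dot3; field.
  - unfold dot3; apply Hunit; auto.
  - apply Hna; auto.
  - apply Hnb; auto.
  - symmetry; apply (schwarzLR O HO); auto.
  - symmetry; apply (schwarzLR O HO); auto.
  - symmetry; apply (schwarzLR O HO); auto.
  - apply Hw1; auto.
  - apply Hw2; auto.
  - apply Hw3; auto.
  - apply sqrt_sqrt; left; auto.
  - auto.
  - auto.
  - auto.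
Qed.


Definition Nn (x1 y1 x2 y2 : R) := x1*x1+y1*y1+x2*x2+y2*y2.
Definition Dn1 x1 y1 x2 y2 a1 b1 a2 b2 :=
  (2*(a1*x2 + x1*a2 + b1*y2 + y1*b2) * Nn x1 y1 x2 y2 - 2*(x1*x2+y1*y2) * (2*(x1*a1+y1*b1+x2*a2+y2*b2))) / (Nn x1 y1 x2 y2 * Nn x1 y1 x2 y2).
Definition Dn2 x1 y1 x2 y2 a1 b1 a2 b2 :=
  (2*(a1*y2 + x1*b2 - b1*x2 - y1*a2) * Nn x1 y1 x2 y2 - 2*(x1*y2-y1*x2) * (2*(x1*a1+y1*b1+x2*a2+y2*b2))) / (Nn x1 y1 x2 y2 * Nn x1 y1 x2 y2).
Definition Dn3 x1 y1 x2 y2 a1 b1 a2 b2 :=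
  (2*(x1*a1 + y1*b1 - x2*a2 - y2*b2) * Nn x1 y1 x2 y2 - (x1*x1+y1*y1-x2*x2-y2*y2) * (2*(x1*a1+y1*b1+x2*a2+y2*b2))) / (Nn x1 y1 x2 y2 * Nn x1 y1 x2 y2).

Lemma herm_self x1 y1 x2 y2 : herm ((x1,y1),(x2,y2)) ((x1,y1),(x2,y2)) = RtoC (Nn x1 y1 x2 y2).
Proof. unfold herm, Nn, RtoC, Cmult, Cplus, Cconj. simpl. f_equal; ring. Qed.
Lemma Cdiv_RtoC (z : C) r : r <> 0 -> Cdiv z (RtoC r) = (fst z / r, snd z / r).
Proof. intros. destruct z as [a b]. unfold Cdiv, Cmult, Cinv, RtoC. simpl. f_equal; field; auto. Qed.
Lemma Cinv_RtoC r : r <> 0 -> Cinv (RtoC r) = RtoC (/ r).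
Proof. intros. unfold Cinv, RtoC. simpl. f_equal; field; auto. Qed.

Lemma FS (x1 y1 x2 y2 a1 b1 a2 b2 c1 d1 c2 d2 : R) : Nn x1 y1 x2 y2 <> 0 ->
  Re (Cdiv (herm ((c1,d1),(c2,d2)) (Pproj ((x1,y1),(x2,y2)) ((a1,b1),(a2,b2)))) (herm ((x1,y1),(x2,y2)) ((x1,y1),(x2,y2))))
  = /4 * (Dn1 x1 y1 x2 y2 c1 d1 c2 d2 * Dn1 x1 y1 x2 y2 a1 b1 a2 b2 + Dn2 x1 y1 x2 y2 c1 d1 c2 d2 * Dn2 x1 y1 x2 y2 a1 b1 a2 b2
          + Dn3 x1 y1 x2 y2 c1 d1 c2 d2 * Dn3 x1 y1 x2 y2 a1 b1 a2 b2).
Proof.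
  intros HN. unfold Pproj. rewrite !herm_self, !Cdiv_RtoC by auto.
  unfold Dn1, Dn2, Dn3. unfold Nn in *.
  unfold herm, vsub, vscal, Cminus, Copp. unfold Cmult, Cplus, Cconj, Re. cbn [fst snd].
  field. auto.
Qed.

Definition hr (x1 y1 x2 y2 a1 b1 a2 b2 : R) := x1*a1 + y1*b1 + x2*a2 + y2*b2.
Definition hi (x1 y1 x2 y2 a1 b1 a2 b2 : R) := x1*b1 - y1*a1 + x2*b2 - y2*a2.

Lemma EL_solve x1 y1 x2 y2 a1 b1 a2 b2 e1 f1 e2 f2 c1 d1 c2 d2 : Nn x1 y1 x2 y2 <> 0 ->
  Pproj ((x1,y1),(x2,y2)) (vsub ((c1,d1),(c2,d2)) (vscal (Cinv (herm ((x1,y1),(x2,y2)) ((x1,y1),(x2,y2))))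
     (vadd (vscal (herm ((x1,y1),(x2,y2)) ((e1,f1),(e2,f2))) ((a1,b1),(a2,b2)))
           (vscal (herm ((x1,y1),(x2,y2)) ((a1,b1),(a2,b2))) ((e1,f1),(e2,f2)))))) = vzero ->
  exists lr li,
    c1 = (hr x1 y1 x2 y2 e1 f1 e2 f2 * a1 - hi x1 y1 x2 y2 e1 f1 e2 f2 * b1 + hr x1 y1 x2 y2 a1 b1 a2 b2 * e1 - hi x1 y1 x2 y2 a1 b1 a2 b2 * f1) / Nn x1 y1 x2 y2 + (lr*x1 - li*y1) /\
    d1 = (hr x1 y1 x2 y2 e1 f1 e2 f2 * b1 + hi x1 y1 x2 y2 e1 f1 e2 f2 * a1 + hr x1 y1 x2 y2 a1 b1 a2 b2 * f1 + hi x1 y1 x2 y2 a1 b1 a2 b2 * e1) / Nn x1 y1 x2 y2 + (lr*y1 + li*x1) /\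
    c2 = (hr x1 y1 x2 y2 e1 f1 e2 f2 * a2 - hi x1 y1 x2 y2 e1 f1 e2 f2 * b2 + hr x1 y1 x2 y2 a1 b1 a2 b2 * e2 - hi x1 y1 x2 y2 a1 b1 a2 b2 * f2) / Nn x1 y1 x2 y2 + (lr*x2 - li*y2) /\
    d2 = (hr x1 y1 x2 y2 e1 f1 e2 f2 * b2 + hi x1 y1 x2 y2 e1 f1 e2 f2 * a2 + hr x1 y1 x2 y2 a1 b1 a2 b2 * f2 + hi x1 y1 x2 y2 a1 b1 a2 b2 * e2) / Nn x1 y1 x2 y2 + (lr*y2 + li*x2).
Proof.
  intros HN H. rewrite herm_self, Cinv_RtoC in H by auto. unfold Pproj in H. rewrite herm_self, Cdiv_RtoC in H by auto.
  assert (HM : vscal (RtoC (/ Nn x1 y1 x2 y2)) (vadd (vscal (herm ((x1,y1),(x2,y2)) ((e1,f1),(e2,f2))) ((a1,b1),(a2,b2)))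
           (vscal (herm ((x1,y1),(x2,y2)) ((a1,b1),(a2,b2))) ((e1,f1),(e2,f2))))
         = (((hr x1 y1 x2 y2 e1 f1 e2 f2 * a1 - hi x1 y1 x2 y2 e1 f1 e2 f2 * b1 + hr x1 y1 x2 y2 a1 b1 a2 b2 * e1 - hi x1 y1 x2 y2 a1 b1 a2 b2 * f1) / Nn x1 y1 x2 y2, (hr x1 y1 x2 y2 e1 f1 e2 f2 * b1 + hi x1 y1 x2 y2 e1 f1 e2 f2 * a1 + hr x1 y1 x2 y2 a1 b1 a2 b2 * f1 + hi x1 y1 x2 y2 a1 b1 a2 b2 * e1) / Nn x1 y1 x2 y2), ((hr x1 y1 x2 y2 e1 f1 e2 f2 * a2 - hi x1 y1 x2 y2 e1 f1 e2 f2 * b2 + hr x1 y1 x2 y2 a1 b1 a2 b2 * e2 - hi x1 y1 x2 y2 a1 b1 a2 b2 * f2) / Nn x1 y1 x2 y2, (hr x1 y1 x2 y2 e1 f1 e2 f2 * b2 + hi x1 y1 x2 y2 e1 f1 e2 f2 * a2 + hr x1 y1 x2 y2 a1 b1 a2 b2 * f2 + hi x1 y1 x2 y2 a1 b1 a2 b2 * e2) / Nn x1 y1 x2 y2))).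
  { unfold vscal, vadd, herm, RtoC, Cconj. unfold Cmult, Cplus. cbn [fst snd]. unfold hr, hi.
    f_equal; f_equal; field; auto. }
  rewrite HM in H. clear HM.
  change (vsub ((c1,d1),(c2,d2)) (((hr x1 y1 x2 y2 e1 f1 e2 f2 * a1 - hi x1 y1 x2 y2 e1 f1 e2 f2 * b1 + hr x1 y1 x2 y2 a1 b1 a2 b2 * e1 - hi x1 y1 x2 y2 a1 b1 a2 b2 * f1) / Nn x1 y1 x2 y2, (hr x1 y1 x2 y2 e1 f1 e2 f2 * b1 + hi x1 y1 x2 y2 e1 f1 e2 f2 * a1 + hr x1 y1 x2 y2 a1 b1 a2 b2 * f1 + hi x1 y1 x2 y2 a1 b1 a2 b2 * e1) / Nn x1 y1 x2 y2), ((hr x1 y1 x2 y2 e1 f1 e2 f2 * a2 - hi x1 y1 x2 y2 e1 f1 e2 f2 * b2 + hr x1 y1 x2 y2 a1 b1 a2 b2 * e2 - hi x1 y1 x2 y2 a1 b1 a2 b2 * f2) / Nn x1 y1 x2 y2, (hr x1 y1 x2 y2 e1 f1 e2 f2 * b2 + hi x1 y1 x2 y2 e1 f1 e2 f2 * a2 + hr x1 y1 x2 y2 a1 b1 a2 b2 * f2 + hi x1 y1 x2 y2 a1 b1 a2 b2 * e2) / Nn x1 y1 x2 y2)))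
    with (((c1 - (hr x1 y1 x2 y2 e1 f1 e2 f2 * a1 - hi x1 y1 x2 y2 e1 f1 e2 f2 * b1 + hr x1 y1 x2 y2 a1 b1 a2 b2 * e1 - hi x1 y1 x2 y2 a1 b1 a2 b2 * f1) / Nn x1 y1 x2 y2), (d1 - (hr x1 y1 x2 y2 e1 f1 e2 f2 * b1 + hi x1 y1 x2 y2 e1 f1 e2 f2 * a1 + hr x1 y1 x2 y2 a1 b1 a2 b2 * f1 + hi x1 y1 x2 y2 a1 b1 a2 b2 * e1) / Nn x1 y1 x2 y2)), ((c2 - (hr x1 y1 x2 y2 e1 f1 e2 f2 * a2 - hi x1 y1 x2 y2 e1 f1 e2 f2 * b2 + hr x1 y1 x2 y2 a1 b1 a2 b2 * e2 - hi x1 y1 x2 y2 a1 b1 a2 b2 * f2) / Nn x1 y1 x2 y2), (d2 - (hr x1 y1 x2 y2 e1 f1 e2 f2 * b2 + hi x1 y1 x2 y2 e1 f1 e2 f2 * a2 + hr x1 y1 x2 y2 a1 b1 a2 b2 * f2 + hi x1 y1 x2 y2 a1 b1 a2 b2 * e2) / Nn x1 y1 x2 y2))) in H.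
  remember (c1 - (hr x1 y1 x2 y2 e1 f1 e2 f2 * a1 - hi x1 y1 x2 y2 e1 f1 e2 f2 * b1 + hr x1 y1 x2 y2 a1 b1 a2 b2 * e1 - hi x1 y1 x2 y2 a1 b1 a2 b2 * f1) / Nn x1 y1 x2 y2) as w1 eqn:E1. remember (d1 - (hr x1 y1 x2 y2 e1 f1 e2 f2 * b1 + hi x1 y1 x2 y2 e1 f1 e2 f2 * a1 + hr x1 y1 x2 y2 a1 b1 a2 b2 * f1 + hi x1 y1 x2 y2 a1 b1 a2 b2 * e1) / Nn x1 y1 x2 y2) as w2 eqn:E2.
  remember (c2 - (hr x1 y1 x2 y2 e1 f1 e2 f2 * a2 - hi x1 y1 x2 y2 e1 f1 e2 f2 * b2 + hr x1 y1 x2 y2 a1 b1 a2 b2 * e2 - hi x1 y1 x2 y2 a1 b1 a2 b2 * f2) / Nn x1 y1 x2 y2) as w3 eqn:E3. remember (d2 - (hr x1 y1 x2 y2 e1 f1 e2 f2 * b2 + hi x1 y1 x2 y2 e1 f1 e2 f2 * a2 + hr x1 y1 x2 y2 a1 b1 a2 b2 * f2 + hi x1 y1 x2 y2 a1 b1 a2 b2 * e2) / Nn x1 y1 x2 y2) as w4 eqn:E4.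
  exists ((x1*w1 + y1*w2 + x2*w3 + y2*w4) / Nn x1 y1 x2 y2), ((x1*w2 - y1*w1 + x2*w4 - y2*w3) / Nn x1 y1 x2 y2).
  unfold vsub, vscal, vzero, herm, RtoC, Cminus, Copp in H. unfold Cmult, Cplus, Cconj in H. cbn [fst snd] in H.
  injection H as H1 H2 H3 H4.
  repeat split; lra.
Qed.

Definition nf1 (u1 v1 u2 v2 : pt -> R) : pt -> R := fun q => 2 * (u1 q * u2 q + v1 q * v2 q) / (u1 q * u1 q + v1 q * v1 q + u2 q * u2 q + v2 q * v2 q).
Definition nf2 (u1 v1 u2 v2 : pt -> R) : pt -> R := fun q => 2 * (u1 q * v2 q - v1 q * u2 q) / (u1 q * u1 q + v1 q * v1 q + u2 q * u2 q + v2 q * v2 q).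
Definition nf3 (u1 v1 u2 v2 : pt -> R) : pt -> R := fun q => (u1 q * u1 q + v1 q * v1 q - u2 q * u2 q - v2 q * v2 q) / (u1 q * u1 q + v1 q * v1 q + u2 q * u2 q + v2 q * v2 q).

Section FL.
Context (O : pt -> Prop) (HO : open O) (u1 v1 u2 v2 : pt -> R)
  (Hu1 : Alg O u1) (Hv1 : Alg O v1) (Hu2 : Alg O u2) (Hv2 : Alg O v2)
  (HN : forall q, O q -> (u1 q * u1 q + v1 q * v1 q + u2 q * u2 q + v2 q * v2 q) <> 0).

Lemma Alg_nf1 : Alg O (nf1 u1 v1 u2 v2). Proof. unfold nf1; alg O HO. Qed.
Lemma Alg_nf2 : Alg O (nf2 u1 v1 u2 v2). Proof. unfold nf2; alg O HO. Qed.
Lemma Alg_nf3 : Alg O (nf3 u1 v1 u2 v2). Proof. unfold nf3; alg O HO. Qed.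

Lemma nf_unit q : O q -> nf1 u1 v1 u2 v2 q * nf1 u1 v1 u2 v2 q + nf2 u1 v1 u2 v2 q * nf2 u1 v1 u2 v2 q + nf3 u1 v1 u2 v2 q * nf3 u1 v1 u2 v2 q = 1.
Proof. intros Hq. specialize (HN q Hq). unfold nf1, nf2, nf3. field. auto. Qed.

Lemma dnL1 q : O q -> pdL (nf1 u1 v1 u2 v2) q = Dn1 (u1 q) (v1 q) (u2 q) (v2 q) (pdL u1 q) (pdL v1 q) (pdL u2 q) (pdL v2 q).
Proof. intros Hq. pose proof (HN q Hq). unfold nf1. dL O HO. unfold Dn1, Nn. field. auto. Qed.

Lemma dnL2 q : O q -> pdL (nf2 u1 v1 u2 v2) q = Dn2 (u1 q) (v1 q) (u2 q) (v2 q) (pdL u1 q) (pdL v1 q) (pdL u2 q) (pdL v2 q).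
Proof. intros Hq. pose proof (HN q Hq). unfold nf2. dL O HO. unfold Dn2, Nn. field. auto. Qed.

Lemma dnL3 q : O q -> pdL (nf3 u1 v1 u2 v2) q = Dn3 (u1 q) (v1 q) (u2 q) (v2 q) (pdL u1 q) (pdL v1 q) (pdL u2 q) (pdL v2 q).
Proof. intros Hq. pose proof (HN q Hq). unfold nf3. dL O HO. unfold Dn3, Nn. field. auto. Qed.

Lemma dnR1 q : O q -> pdR (nf1 u1 v1 u2 v2) q = Dn1 (u1 q) (v1 q) (u2 q) (v2 q) (pdR u1 q) (pdR v1 q) (pdR u2 q) (pdR v2 q).
Proof. intros Hq. pose proof (HN q Hq). unfold nf1. dR O HO. unfold Dn1, Nn. field. auto. Qed.

Lemma dnR2 q : O q -> pdR (nf2 u1 v1 u2 v2) q = Dn2 (u1 q) (v1 q) (u2 q) (v2 q) (pdR u1 q) (pdR v1 q) (pdR u2 q) (pdR v2 q).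
Proof. intros Hq. pose proof (HN q Hq). unfold nf2. dR O HO. unfold Dn2, Nn. field. auto. Qed.

Lemma dnR3 q : O q -> pdR (nf3 u1 v1 u2 v2) q = Dn3 (u1 q) (v1 q) (u2 q) (v2 q) (pdR u1 q) (pdR v1 q) (pdR u2 q) (pdR v2 q).
Proof. intros Hq. pose proof (HN q Hq). unfold nf3. dR O HO. unfold Dn3, Nn. field. auto. Qed.

Lemma JL_eq q : O q -> J_L (fun r => ((u1 r, v1 r), (u2 r, v2 r))) q = Ef (nf1 u1 v1 u2 v2) (nf2 u1 v1 u2 v2) (nf3 u1 v1 u2 v2) q.
Proof.
  intros Hq. unfold Ef. rewrite !dnL1, !dnL2, !dnL3 by auto.
  unfold J_L. change (vdL (fun r => ((u1 r, v1 r), (u2 r, v2 r))) q) with ((pdL u1 q, pdL v1 q), (pdL u2 q, pdL v2 q)). cbv beta.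
  rewrite FS. reflexivity. apply HN; auto.
Qed.
Lemma JR_eq q : O q -> J_R (fun r => ((u1 r, v1 r), (u2 r, v2 r))) q = Gf (nf1 u1 v1 u2 v2) (nf2 u1 v1 u2 v2) (nf3 u1 v1 u2 v2) q.
Proof.
  intros Hq. unfold Gf. rewrite !dnR1, !dnR2, !dnR3 by auto.
  unfold J_R. change (vdR (fun r => ((u1 r, v1 r), (u2 r, v2 r))) q) with ((pdR u1 q, pdR v1 q), (pdR u2 q, pdR v2 q)). cbv beta.
  rewrite FS. reflexivity. apply HN; auto.
Qed.
Lemma GLR_eq q : O q -> G_LR (fun r => ((u1 r, v1 r), (u2 r, v2 r))) q = Ff (nf1 u1 v1 u2 v2) (nf2 u1 v1 u2 v2) (nf3 u1 v1 u2 v2) q.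
Proof.
  intros Hq. unfold Ff. rewrite !dnR1, !dnR2, !dnR3, !dnL1, !dnL2, !dnL3 by auto.
  unfold G_LR. change (vdL (fun r => ((u1 r, v1 r), (u2 r, v2 r))) q) with ((pdL u1 q, pdL v1 q), (pdL u2 q, pdL v2 q)). change (vdR (fun r => ((u1 r, v1 r), (u2 r, v2 r))) q) with ((pdR u1 q, pdR v1 q), (pdR u2 q, pdR v2 q)). cbv beta.
  rewrite FS. f_equal. ring. apply HN; auto.
Qed.

Section Wave.
Context (HEL : forall q, O q -> Pproj ((u1 q, v1 q), (u2 q, v2 q)) (vsub ((pdL (pdR u1) q, pdL (pdR v1) q), (pdL (pdR u2) q, pdL (pdR v2) q)) (vscal (Cinv (herm ((u1 q, v1 q), (u2 q, v2 q)) ((u1 q, v1 q), (u2 q, v2 q))))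
    (vadd (vscal (herm ((u1 q, v1 q), (u2 q, v2 q)) ((pdR u1 q, pdR v1 q), (pdR u2 q, pdR v2 q))) ((pdL u1 q, pdL v1 q), (pdL u2 q, pdL v2 q))) (vscal (herm ((u1 q, v1 q), (u2 q, v2 q)) ((pdL u1 q, pdL v1 q), (pdL u2 q, pdL v2 q))) ((pdR u1 q, pdR v1 q), (pdR u2 q, pdR v2 q)))))) = vzero).

Lemma wave1 q : O q -> pdL (pdR (nf1 u1 v1 u2 v2)) q = - (pdL (nf1 u1 v1 u2 v2) q * pdR (nf1 u1 v1 u2 v2) q + pdL (nf2 u1 v1 u2 v2) q * pdR (nf2 u1 v1 u2 v2) q + pdL (nf3 u1 v1 u2 v2) q * pdR (nf3 u1 v1 u2 v2) q) * nf1 u1 v1 u2 v2 q.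
Proof.
  intros Hq. pose proof (HN q Hq) as HNq.
  rewrite (L_ext O HO (pdR (nf1 u1 v1 u2 v2)) (fun r => Dn1 (u1 r) (v1 r) (u2 r) (v2 r) (pdR u1 r) (pdR v1 r) (pdR u2 r) (pdR v2 r))); auto.
  2: intros; apply dnR1; auto.
  unfold Dn1, Nn. dL O HO.
  rewrite !dnL1, !dnL2, !dnL3, !dnR1, !dnR2, !dnR3 by auto.
  destruct (EL_solve (u1 q) (v1 q) (u2 q) (v2 q) (pdL u1 q) (pdL v1 q) (pdL u2 q) (pdL v2 q)
     (pdR u1 q) (pdR v1 q) (pdR u2 q) (pdR v2 q) (pdL (pdR u1) q) (pdL (pdR v1) q) (pdL (pdR u2) q) (pdL (pdR v2) q) HNq (HEL q Hq))
     as [lr [li [E1 [E2 [E3 E4]]]]].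
  rewrite E1, E2, E3, E4. unfold nf1, Dn1, Dn2, Dn3, Nn, hr, hi. field. auto.
Qed.
Lemma wave2 q : O q -> pdL (pdR (nf2 u1 v1 u2 v2)) q = - (pdL (nf1 u1 v1 u2 v2) q * pdR (nf1 u1 v1 u2 v2) q + pdL (nf2 u1 v1 u2 v2) q * pdR (nf2 u1 v1 u2 v2) q + pdL (nf3 u1 v1 u2 v2) q * pdR (nf3 u1 v1 u2 v2) q) * nf2 u1 v1 u2 v2 q.
Proof.
  intros Hq. pose proof (HN q Hq) as HNq.
  rewrite (L_ext O HO (pdR (nf2 u1 v1 u2 v2)) (fun r => Dn2 (u1 r) (v1 r) (u2 r) (v2 r) (pdR u1 r) (pdR v1 r) (pdR u2 r) (pdR v2 r))); auto.
  2: intros; apply dnR2; auto.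
  unfold Dn2, Nn. dL O HO.
  rewrite !dnL1, !dnL2, !dnL3, !dnR1, !dnR2, !dnR3 by auto.
  destruct (EL_solve (u1 q) (v1 q) (u2 q) (v2 q) (pdL u1 q) (pdL v1 q) (pdL u2 q) (pdL v2 q)
     (pdR u1 q) (pdR v1 q) (pdR u2 q) (pdR v2 q) (pdL (pdR u1) q) (pdL (pdR v1) q) (pdL (pdR u2) q) (pdL (pdR v2) q) HNq (HEL q Hq))
     as [lr [li [E1 [E2 [E3 E4]]]]].
  rewrite E1, E2, E3, E4. unfold nf2, Dn1, Dn2, Dn3, Nn, hr, hi. field. auto.
Qed.
Lemma wave3 q : O q -> pdL (pdR (nf3 u1 v1 u2 v2)) q = - (pdL (nf1 u1 v1 u2 v2) q * pdR (nf1 u1 v1 u2 v2) q + pdL (nf2 u1 v1 u2 v2) q * pdR (nf2 u1 v1 u2 v2) q + pdL (nf3 u1 v1 u2 v2) q * pdR (nf3 u1 v1 u2 v2) q) * nf3 u1 v1 u2 v2 q.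
Proof.
  intros Hq. pose proof (HN q Hq) as HNq.
  rewrite (L_ext O HO (pdR (nf3 u1 v1 u2 v2)) (fun r => Dn3 (u1 r) (v1 r) (u2 r) (v2 r) (pdR u1 r) (pdR v1 r) (pdR u2 r) (pdR v2 r))); auto.
  2: intros; apply dnR3; auto.
  unfold Dn3, Nn. dL O HO.
  rewrite !dnL1, !dnL2, !dnL3, !dnR1, !dnR2, !dnR3 by auto.
  destruct (EL_solve (u1 q) (v1 q) (u2 q) (v2 q) (pdL u1 q) (pdL v1 q) (pdL u2 q) (pdL v2 q)
     (pdR u1 q) (pdR v1 q) (pdR u2 q) (pdR v2 q) (pdL (pdR u1) q) (pdL (pdR v1) q) (pdL (pdR u2) q) (pdL (pdR v2) q) HNq (HEL q Hq))
     as [lr [li [E1 [E2 [E3 E4]]]]].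
  rewrite E1, E2, E3, E4. unfold nf3, Dn1, Dn2, Dn3, Nn, hr, hi. field. auto.
Qed.
End Wave.

End FL.

Lemma main_aux (O : pt -> Prop) (u1 v1 u2 v2 : pt -> R) : open O ->
  smoothC2_on O (fun r => ((u1 r, v1 r), (u2 r, v2 r))) ->
  (forall p, O p -> (fun r => ((u1 r, v1 r), (u2 r, v2 r))) p <> vzero) ->
  (forall p, O p -> CP1_EL (fun r => ((u1 r, v1 r), (u2 r, v2 r))) p) ->
  (forall p, O p -> detG (fun r => ((u1 r, v1 r), (u2 r, v2 r))) p <> 0) ->
  forall p, O p -> gaussK (fun r => ((u1 r, v1 r), (u2 r, v2 r))) p = -4.
Proof.
  intros HO [S1 [S2 [S3 S4]]] Hnz HEL HD p Hp.
  assert (Hu1 : Alg O u1) by (apply A_sm; exact S1).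
  assert (Hv1 : Alg O v1) by (apply A_sm; exact S2).
  assert (Hu2 : Alg O u2) by (apply A_sm; exact S3).
  assert (Hv2 : Alg O v2) by (apply A_sm; exact S4).
  assert (HN : forall q, O q -> (u1 q * u1 q + v1 q * v1 q + u2 q * u2 q + v2 q * v2 q) <> 0).
  { intros q Hq HZ. apply (Hnz q Hq).
    assert (Z1 : u1 q = 0) by nra. assert (Z2 : v1 q = 0) by nra. assert (Z3 : u2 q = 0) by nra. assert (Z4 : v2 q = 0) by nra.
    cbv beta. rewrite Z1, Z2, Z3, Z4. reflexivity. }
  assert (HEL' : forall q, O q -> Pproj ((u1 q, v1 q), (u2 q, v2 q)) (vsub ((pdL (pdR u1) q, pdL (pdR v1) q), (pdL (pdR u2) q, pdL (pdR v2) q)) (vscal (Cinv (herm ((u1 q, v1 q), (u2 q, v2 q)) ((u1 q, v1 q), (u2 q, v2 q))))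
    (vadd (vscal (herm ((u1 q, v1 q), (u2 q, v2 q)) ((pdR u1 q, pdR v1 q), (pdR u2 q, pdR v2 q))) ((pdL u1 q, pdL v1 q), (pdL u2 q, pdL v2 q)))
          (vscal (herm ((u1 q, v1 q), (u2 q, v2 q)) ((pdL u1 q, pdL v1 q), (pdL u2 q, pdL v2 q))) ((pdR u1 q, pdR v1 q), (pdR u2 q, pdR v2 q)))))) = vzero).
  { intros q Hq. exact (HEL q Hq). }
  assert (Hdet : forall q, O q -> detG (fun r => ((u1 r, v1 r), (u2 r, v2 r))) q = Df (nf1 u1 v1 u2 v2) (nf2 u1 v1 u2 v2) (nf3 u1 v1 u2 v2) q).
  { intros q Hq. unfold detG, Df. rewrite (JL_eq O HO), (JR_eq O HO), (GLR_eq O HO); auto. ring. }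
  unfold gaussK. rewrite Hdet by auto.
  rewrite (R_ext O HO _ (fun q => (pdL (Ff (nf1 u1 v1 u2 v2) (nf2 u1 v1 u2 v2) (nf3 u1 v1 u2 v2)) q - /2 * Ff (nf1 u1 v1 u2 v2) (nf2 u1 v1 u2 v2) (nf3 u1 v1 u2 v2) q * pdL (fun r => ln (Ef (nf1 u1 v1 u2 v2) (nf2 u1 v1 u2 v2) (nf3 u1 v1 u2 v2) r)) q) / sqrt (Df (nf1 u1 v1 u2 v2) (nf2 u1 v1 u2 v2) (nf3 u1 v1 u2 v2) q))); auto.
  2: { intros q Hq. rewrite (L_ext O HO (G_LR (fun r => ((u1 r, v1 r), (u2 r, v2 r)))) (Ff (nf1 u1 v1 u2 v2) (nf2 u1 v1 u2 v2) (nf3 u1 v1 u2 v2))); auto.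
       2: intros; apply (GLR_eq O HO); auto.
       rewrite (GLR_eq O HO); auto.
       rewrite (L_ext O HO (fun r => ln (J_L (fun r => ((u1 r, v1 r), (u2 r, v2 r))) r)) (fun r => ln (Ef (nf1 u1 v1 u2 v2) (nf2 u1 v1 u2 v2) (nf3 u1 v1 u2 v2) r))); auto.
       2: intros; rewrite (JL_eq O HO); auto.
       rewrite Hdet; auto. }
  apply (core O HO); auto.
  - apply (Alg_nf1 O); auto.
  - apply (Alg_nf2 O); auto.
  - apply (Alg_nf3 O); auto.
  - intros; apply (nf_unit O); auto.
  - intros; apply (wave1 O HO); auto.
  - intros; apply (wave2 O HO); auto.
  - intros; apply (wave3 O HO); auto.
  - intros q Hq. rewrite <- Hdet; auto.
Qed.

Theorem mainTheorem2 (Omega : pt -> Prop) (f : pt -> C2) :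
  open_R2 Omega -> connected_R2 Omega -> simply_connected_R2 Omega ->
  (exists p0, Omega p0) ->
  smoothC2_on Omega f ->
  (forall p, Omega p -> f p <> vzero) ->
  (forall p, Omega p -> CP1_EL f p) ->
  (forall p, Omega p -> detG f p <> 0) ->
  forall p, Omega p -> gaussK f p = -4.
Proof.
  intros HO _ _ _ Hs Hnz HEL HD.
  assert (Hf : exists u1 v1 u2 v2 : pt -> R, f = (fun r => ((u1 r, v1 r), (u2 r, v2 r)))).
  { exists (fun q => Re (fst (f q))), (fun q => Im (fst (f q))), (fun q => Re (snd (f q))), (fun q => Im (snd (f q))).
    apply functional_extensionality. intros q. destruct (f q) as [[a b] [c d]]. reflexivity. }
  destruct Hf as [u1 [v1 [u2 [v2 Hf]]]]. subst f.
  apply main_aux; auto.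
Qed.
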